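(* Let $K$ be a field, $n\ge 2$, $R=K[x_1,\dots,x_n]$, and let $\boldsymbol{\lambda}=(\lambda_1,\dots,\lambda_n)$ be a vector of positive integers. Put $\ell=\mathrm{lcm}(\lambda_1,\dots,\lambda_{n-1})$ and $\boldsymbol{\lambda}'=(\lambda_1,\dots,\lambda_{n-1},\lambda_n+\ell)$. If $I(\boldsymbol{\lambda}')$ is normal then $I(\boldsymbol{\lambda})$ is normal. If moreover $\lambda_n\ge \ell$ and $I(\boldsymbol{\lambda})$ is normal, then $I(\boldsymbol{\lambda}')$ is normal.
   Context: For a vector $\boldsymbol{\mu}=(\mu_1,\dots,\mu_n)$ of positive integers, $J(\boldsymbol{\mu})=(x_1^{\mu_1},\dots,x_n^{\mu_n})\subseteq R$ and $I(\boldsymbol{\mu})=\overline{J(\boldsymbol{\mu})}$ is its integral closure in $R$. An ideal $I$ of an integral domain is normal if $I^m$ is integrally closed for every positive integer $m$. *)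

(* Defs.v *)
From HB Require Import structures.
From mathcomp Require Import all_boot all_order all_algebra.
From mathcomp Require Import mpoly.
Set Implicit Arguments. Unset Strict Implicit. Unset Printing Implicit Defensive.
Import GRing.Theory.
Local Open Scope ring_scope.

Section Ideals.
Variable R : comNzRingType.

Definition ideal_gen (S : R -> Prop) : R -> Prop :=
  fun f => exists (k : nat) (g c : 'I_k -> R),
    (forall i, S (g i)) /\ f = \sum_(i < k) c i * g i.

Definition ideal_mul (I J : R -> Prop) : R -> Prop :=
  ideal_gen (fun f => exists a b, I a /\ J b /\ f = a * b).

Fixpoint ideal_pow (I : R -> Prop) (m : nat) : R -> Prop :=
  match m with
  | 0%N => fun _ => True
  | m'.+1 => ideal_mul I (ideal_pow I m')
  end.

Definition integral_closure (I : R -> Prop) : R -> Prop :=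
  fun f => exists (m : nat) (a : nat -> R),
    (0 < m)%N /\ (forall i, (1 <= i <= m)%N -> ideal_pow I i (a i)) /\
    f ^+ m + \sum_(1 <= i < m.+1) a i * f ^+ (m - i) = 0.

Definition integrally_closed (I : R -> Prop) : Prop :=
  forall f, integral_closure I f -> I f.

Definition normal_ideal (I : R -> Prop) : Prop :=
  forall m : nat, (0 < m)%N -> integrally_closed (ideal_pow I m).

End Ideals.

Definition Jmu (K : fieldType) (n : nat) (mu : 'I_n -> nat) : {mpoly K[n]} -> Prop :=
  ideal_gen (fun f => exists i : 'I_n, f = 'X_i ^+ (mu i)).

Definition Imu (K : fieldType) (n : nat) (mu : 'I_n -> nat) : {mpoly K[n]} -> Prop :=
  integral_closure (@Jmu K n mu).

(* l = lcm(lambda_1, ..., lambda_{n-1}) (0-indexed: indices i < n-1). *)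
Definition lcm_init (n : nat) (lam : 'I_n -> nat) : nat :=
  \big[lcmn/1%N]_(i < n | (val i < n.-1)%N) lam i.

Definition lam_shift (n : nat) (lam : 'I_n -> nat) : 'I_n -> nat :=
  fun i => if val i == n.-1 then (lam i + lcm_init lam)%N else lam i.

(* Main.v *)
Require Import Defs.
From HB Require Import structures.
From mathcomp Require Import all_boot all_order all_algebra.
From mathcomp Require Import mpoly.
From mathcomp Require Import zify ring.
Set Implicit Arguments. Unset Strict Implicit. Unset Printing Implicit Defensive.
Import GRing.Theory.

Local Open Scope ring_scope.

Section IdealLemmas.
Variable R : comNzRingType.
Implicit Types (S I : R -> Prop).

Lemma gen_base S x : S x -> ideal_gen S x.
Proof.
move=> Sx; exists 1%N, (fun=> x), (fun=> 1); split=> //.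
by rewrite big_ord1 mul1r.
Qed.

Lemma gen0 S : ideal_gen S 0.
Proof.
exists 0%N, (fun=> 0), (fun=> 0); split; first by case.
by rewrite big_ord0.

Qed.

Lemma genD S x y : ideal_gen S x -> ideal_gen S y -> ideal_gen S (x + y).
Proof.
move=> [k1 [g1 [c1 [H1 ->]]]] [k2 [g2 [c2 [H2 ->]]]].
exists (k1 + k2)%N,
  (fun i => match split i with inl a => g1 a | inr b => g2 b end),
  (fun i => match split i with inl a => c1 a | inr b => c2 b end).
split.
  by move=> i; case: (split i).
rewrite big_split_ord /=; congr (_ + _); apply: eq_bigr => i _.
  by rewrite (unsplitK (inl i)).
by rewrite (unsplitK (inr i)).
Qed.

Lemma genM S r x : ideal_gen S x -> ideal_gen S (r * x).
Proof.
move=> [k [g [c [H ->]]]]; exists k, g, (fun i => r * c i); split=> //.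
by rewrite mulr_sumr; apply: eq_bigr => i _; rewrite mulrA.
Qed.

Lemma pow0 I p : ideal_pow I p 0.
Proof. by case: p => [|p] //=; apply: gen0. Qed.

Lemma powM I p r x : ideal_pow I p x -> ideal_pow I p (r * x).
Proof. by case: p => [|p] //=; apply: genM. Qed.

Lemma powD I p x y : ideal_pow I p x -> ideal_pow I p y -> ideal_pow I p (x + y).
Proof. by case: p => [|p] //=; apply: genD. Qed.

Lemma pow_cons I p x y : I x -> ideal_pow I p y -> ideal_pow I p.+1 (x * y).
Proof. by move=> Ix Py; apply: gen_base; exists x, y. Qed.

Lemma pow_listF (T : eqType) I (s : seq T) (F : T -> R) p :
  (forall x, x \in s -> I (F x)) -> (p <= size s)%N ->
  ideal_pow I p (\prod_(x <- s) F x).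
Proof.
elim: s p => [|x s IH] [|p] //= Hs Hp.
rewrite big_cons; apply: pow_cons; first by apply: Hs; rewrite inE eqxx.
by apply: IH => // y ys; apply: Hs; rewrite inE ys orbT.
Qed.

Lemma pow_list I (s : seq R) p :
  (forall x, x \in s -> I x) -> (p <= size s)%N -> ideal_pow I p (\prod_(x <- s) x).
Proof. exact: pow_listF. Qed.

Lemma pow_pow_list I (s : seq R) k N :
  (forall x, x \in s -> I x) -> (k * N <= size s)%N ->
  ideal_pow (ideal_pow I k) N (\prod_(x <- s) x).
Proof.
elim: N s => [|N IH] s Hs Hp //=.
rewrite -(cat_take_drop k s) big_cat /=; apply: pow_cons.
  apply: pow_list; first by move=> x /mem_take; apply: Hs.
  rewrite size_take; case: ifP => // /negbT; rewrite -leqNgt => _.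
  move: Hp; rewrite mulnS; lia.
apply: IH; first by move=> x /mem_drop; apply: Hs.
rewrite size_drop; move: Hp; rewrite mulnS; lia.
Qed.

Lemma closure_of_pow I x N : (0 < N)%N -> ideal_pow I N (x ^+ N) ->
  integral_closure I x.
Proof.
move=> N0 HN.
exists N, (fun i => if i == N then - x ^+ N else 0); split=> //; split.
  move=> i _; case: ifP => [/eqP ->|_]; last exact: pow0.
  by rewrite -mulN1r; apply: powM.
rewrite big_nat_recr //= eqxx subnn expr0 mulr1 big1_seq ?add0r ?subrr //.
move=> i /andP [_]; rewrite mem_index_iota => /andP [_ Hi].
by rewrite (ltn_eqF Hi) mul0r.
Qed.

End IdealLemmas.

Section Supp.
Variables (K : fieldType) (n : nat).
Notation P := {mpoly K[n]}.
Implicit Types (f g : P) (Q : 'X_{1..n} -> Prop).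

Definition suppP Q f := forall m, m \in msupp f -> Q m.

Lemma suppP0 Q : suppP Q 0.
Proof. by move=> m; rewrite msupp0. Qed.

Lemma suppPD Q f g : suppP Q f -> suppP Q g -> suppP Q (f + g).
Proof. by move=> Hf Hg m /msuppD_le; rewrite mem_cat => /orP [/Hf|/Hg]. Qed.

Lemma suppPN Q f : suppP Q f -> suppP Q (- f).
Proof. by move=> Hf m; rewrite (perm_mem (msuppN f)) => /Hf. Qed.

Lemma suppPZ Q c f : suppP Q f -> suppP Q (c *: f).
Proof. by move=> Hf m /msuppZ_le /Hf. Qed.

Lemma suppPX Q m : Q m -> suppP Q 'X_[m].
Proof. by move=> Hm m'; rewrite msuppX mem_seq1 => /eqP ->. Qed.

Lemma suppP_mono Q Q' f : (forall m, Q m -> Q' m) -> suppP Q f -> suppP Q' f.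
Proof. by move=> HQ Hf m /Hf /HQ. Qed.

Lemma suppP_sum Q (I : Type) (r : seq I) (B : pred I) F :
  (forall i, B i -> suppP Q (F i)) -> suppP Q (\sum_(i <- r | B i) F i).
Proof.
move=> H; apply: (big_ind (suppP Q)); [exact: suppP0 | exact: suppPD | exact: H].
Qed.

Lemma suppPM Q1 Q2 Q3 f g :
  (forall m1 m2, Q1 m1 -> Q2 m2 -> Q3 (m1 + m2)%MM) ->
  suppP Q1 f -> suppP Q2 g -> suppP Q3 (f * g).
Proof.
move=> H h1 h2; rewrite (mpolyE f) (mpolyE g) mulr_suml big_seq.
apply: suppP_sum => m1 /h1 p1; rewrite mulr_sumr big_seq.
apply: suppP_sum => m2 /h2 p2.
rewrite -scalerAl -scalerAr -mpolyXD; do 2 apply: suppPZ.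
by apply: suppPX; apply: H.
Qed.

Lemma suppP_coef Q f m : suppP Q f -> f@_m != 0 -> Q m.
Proof. by move=> H; rewrite -mcoeff_msupp => /H. Qed.

Lemma suppP_nil Q f : (forall m, Q m -> False) -> suppP Q f -> f = 0.
Proof.
move=> HQ Hf; apply: msuppnil0; case E: (msupp f) => [|m s] //.
by have := Hf m; rewrite E inE eqxx => /(_ isT) /HQ.
Qed.

Lemma genP Q S f : (forall m1 m2, Q m2 -> Q (m1 + m2)%MM) ->
  (forall x, S x -> suppP Q x) -> ideal_gen S f -> suppP Q f.
Proof.
move=> Hup HS [k [g [c [Hg ->]]]]; apply: suppP_sum => i _.
apply: (@suppPM (fun _ => True) Q) => //; first by move=> m1 m2 _; apply: Hup.
exact: HS.
Qed.

Lemma powP (Qk : nat -> 'X_{1..n} -> Prop) (I : P -> Prop) :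
  (forall m, Qk 0%N m) ->
  (forall a b m1 m2, Qk a m1 -> Qk b m2 -> Qk (a + b)%N (m1 + m2)%MM) ->
  (forall x, I x -> suppP (Qk 1%N) x) ->
  forall p x, ideal_pow I p x -> suppP (Qk p) x.
Proof.
move=> H0 HD HI; elim=> [|p IH] x /=; first by move=> _ m _; apply: H0.
apply: genP.
- by move=> m1 m2 Hm2; rewrite -[p.+1]add0n; apply: HD.
- move=> y [a [b [Ia [Pb ->]]]]; apply: (@suppPM (Qk 1%N) (Qk p)) => //.
  + by move=> m1 m2 h1 h2; rewrite -add1n; apply: HD.
  + exact: HI.
  + exact: IH.
Qed.

End Supp.

Section Clos.
Variables (K : fieldType) (n : nat).
Notation P := {mpoly K[n]}.
Variable wt : 'X_{1..n} -> nat.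
Hypothesis wtD : forall m1 m2, wt (m1 + m2)%MM = (wt m1 + wt m2)%N.

Lemma wt0 : wt 0%MM = 0%N.
Proof. by have := wtD 0%MM 0%MM; rewrite addm0; lia. Qed.

Lemma suppW_exp d (f : P) j : suppP (fun m => d <= wt m)%N f ->
  suppP (fun m => j * d <= wt m)%N (f ^+ j).
Proof.
move=> Hf; elim: j => [|j IH]; first by rewrite expr0 -mpolyX0; apply: suppPX.
rewrite exprSr; apply: (suppPM _ IH Hf) => m1 m2 h1 h2; rewrite wtD mulSnr; lia.
Qed.

Lemma suppH_exp d (f : P) j : suppP (fun m => wt m == d)%N f ->
  suppP (fun m => wt m == j * d)%N (f ^+ j).
Proof.
move=> Hf; elim: j => [|j IH].
  by rewrite expr0 -mpolyX0; apply: suppPX; rewrite wt0.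
rewrite exprSr; apply: (suppPM _ IH Hf) => m1 m2 /eqP h1 /eqP h2.
by rewrite wtD mulSnr h1 h2.
Qed.

Lemma closure_W (I : P -> Prop) c :
  (forall i x, (0 < i)%N -> ideal_pow I i x -> suppP (fun m => i * c <= wt m)%N x) ->
  forall f, integral_closure I f -> suppP (fun m => c <= wt m)%N f.
Proof.
move=> HI f [N [a [N0 [Ha Heq]]]] m0 Hm0.
rewrite leqNgt; apply/negP => Hlt.
have Hex : exists d, has (fun m => wt m == d) (msupp f).
  by exists (wt m0); apply/hasP; exists m0.
case: (ex_minnP Hex) => d /hasP [m1 Hm1 /eqP Hwm1] Hmin.
have Hmin' : forall m, m \in msupp f -> (d <= wt m)%N.
  by move=> m Hm; apply: Hmin; apply/hasP; exists m.
have Hdc : (d < c)%N by apply: leq_ltn_trans (Hmin' _ Hm0) Hlt.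
set h := \sum_(m <- msupp f | wt m == d) f@_m *: 'X_[m].
set r := \sum_(m <- msupp f | wt m != d) f@_m *: 'X_[m].
have Hfhr : f = h + r by rewrite {1}(mpolyE f) (bigID (fun m => wt m == d)).
have Hh : suppP (fun m => wt m == d) h.
  by apply: suppP_sum => m Hm; apply: suppPZ; apply: suppPX.
have Hr : suppP (fun m => d < wt m)%N r.
  rewrite /r big_seq_cond; apply: suppP_sum => m /andP [Hm Hne].
  apply: suppPZ; apply: suppPX; rewrite ltn_neqAle eq_sym Hne; exact: Hmin'.
have Hf : suppP (fun m => d <= wt m)%N f by move=> m /Hmin'.
clearbody h r.
have Hpow : forall j, exists rj, f ^+ j = h ^+ j + rj /\
    suppP (fun m => j * d < wt m)%N rj.
  elim=> [|j [rj [E Hrj]]]; first by exists 0; rewrite addr0; split=> //; apply: suppP0.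
  exists (h ^+ j * r + rj * f); split.
    by rewrite exprSr E Hfhr exprSr; ring.
  apply: suppPD.
    have Hh' : suppP (fun m => d <= wt m)%N h.
      by apply: suppP_mono Hh => m /eqP ->.
    apply: (suppPM _ (suppW_exp (j:=j) Hh') Hr).
    by move=> m1' m2' h1 h2; rewrite wtD mulSnr; lia.
  apply: (suppPM _ Hrj Hf) => m1' m2' h1 h2; rewrite wtD mulSnr; lia.
have [rN [EN HrN]] := Hpow N.
set T := \sum_(1 <= i < N.+1) a i * f ^+ (N - i).
have HT : suppP (fun m => N * d < wt m)%N T.
  rewrite /T big_seq_cond; apply: suppP_sum => i /andP [Hi _].
  move: Hi; rewrite mem_index_iota => /andP [Hi1 HiN].
  apply: (suppPM _ (HI i (a i) Hi1 (Ha i _)) (suppW_exp (j:=N - i) Hf)).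
    move=> m1' m2' h1 h2; rewrite wtD.
    have E : (N * d = i * d + (N - i) * d)%N by rewrite -mulnDl subnKC.
    have : (i * d < i * c)%N by rewrite ltn_pmul2l.
    lia.
  by rewrite Hi1.
move: Heq; rewrite EN -addrA => /eqP; rewrite addr_eq0 => /eqP HhN.
have H1 : suppP (fun m => N * d < wt m)%N (h ^+ N).
  by rewrite HhN; apply: suppPN; apply: suppPD.
have H2 := suppH_exp (j:=N) Hh.
have : h ^+ N = 0.
  apply: (@suppP_nil _ _ (fun m => (wt m == N * d) && (N * d < wt m)%N)).
    by move=> m /andP [/eqP -> ]; rewrite ltnn.
  by move=> m Hm; rewrite H1 // H2.
move/eqP; rewrite expf_eq0 N0 /= => /eqP h0.
by move: (Hr m1); rewrite -(add0r r) -h0 -Hfhr Hwm1 ltnn => /(_ Hm1).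
Qed.

End Clos.

Section Main.
Variables (K : fieldType) (n : nat) (lam : 'I_n -> nat) (lst : 'I_n) (l : nat).
Hypothesis lam_gt0 : forall i, (0 < lam i)%N.
Hypothesis l_gt0 : (0 < l)%N.
Hypothesis lam_dvd : forall i, i != lst -> (lam i %| l)%N.

Definition wS (m : 'X_{1..n}) := (\sum_(i < n | i != lst) m i * (l %/ lam i))%N.
Definition wtS M (m : 'X_{1..n}) := (wS m * M + m lst * l)%N.
Definition validS M (m : 'X_{1..n}) := (l * M <= wtS M m)%N.
Definition DS M k (m : 'X_{1..n}) := exists s : seq 'X_{1..n},
  size s = k /\ all (validS M) s /\ (\sum_(b <- s) b <= m)%MM.
Definition CombS M := forall k, (0 < k)%N -> forall a,
  (k * (l * M) <= wtS M a)%N -> DS M k a.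

Lemma wD m1 m2 : wS (m1 + m2)%MM = (wS m1 + wS m2)%N.
Proof. by rewrite /wS -big_split; apply: eq_bigr => i _; rewrite mnmDE mulnDl. Qed.

Lemma wtMD M m1 m2 : wtS M (m1 + m2)%MM = (wtS M m1 + wtS M m2)%N.
Proof. rewrite /wtS wD mnmDE; lia. Qed.

Section Mu.
Variable mu : 'I_n -> nat.
Hypothesis mu_lam : forall i, i != lst -> mu i = lam i.
Hypothesis M_gt0 : (0 < mu lst)%N.
Local Notation M := (mu lst).

Definition om i := if i == lst then l else (l %/ lam i * M)%N.

Lemma wtM_sum m : wtS M m = (\sum_i m i * om i)%N.
Proof.
rewrite (bigD1 lst) //= /om eqxx /wtS addnC; congr (_ + _)%N.
rewrite /wS big_distrl; apply: eq_bigr => i /negbTE ->; by rewrite mulnA.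
Qed.

Lemma mu_om i : (mu i * om i = l * M)%N.
Proof.
rewrite /om; case: eqP => [->|/eqP ne]; first by rewrite mulnC.
by rewrite mu_lam // mulnA (mulnC (lam i)) divnK ?lam_dvd.
Qed.

Lemma wtU i k : wtS M (U_(i) *+ k)%MM = (k * om i)%N.
Proof.
rewrite wtM_sum (bigD1 i) //= big1 ?addn0.
  by rewrite mulmnE mnm1E eqxx mul1n.
by move=> j /negbTE ne; rewrite mulmnE mnm1E eq_sym ne.
Qed.

Lemma wtU_mu i : wtS M (U_(i) *+ mu i)%MM = (l * M)%N.
Proof. by rewrite wtU mu_om. Qed.

Notation J := (@Jmu K n mu).
Notation I := (@Imu K n mu).
Notation W t := (suppP (fun m => t <= wtS M m)%N).

Lemma powW (Id : {mpoly K[n]} -> Prop) t :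
  (forall x, Id x -> W t x) -> forall p x, ideal_pow Id p x -> W (p * t)%N x.
Proof.
move=> HI; apply: (@powP _ _ (fun p m => p * t <= wtS M m)%N).
- by move=> m.
- by move=> a b m1 m2 h1 h2; rewrite wtMD mulnDl; lia.
- by move=> x /HI; apply: suppP_mono => m; rewrite mul1n.
Qed.

Lemma J_W x : J x -> W (l * M)%N x.
Proof.
apply: genP.
  by move=> m1 m2 h; rewrite wtMD; lia.
move=> y [i ->]; rewrite mpolyXn; apply: suppPX; by rewrite wtU_mu.
Qed.

Lemma I_W x : I x -> W (l * M)%N x.
Proof.
apply: (closure_W (wtMD M)) => i y _; exact: (powW J_W).
Qed.

Lemma mono_list (b : 'X_{1..n}) : exists s : seq {mpoly K[n]},
  (forall x, x \in s -> exists i, x = 'X_i ^+ mu i) /\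
  size s = wtS M b /\ \prod_(x <- s) x = 'X_[b] ^+ (l * M).
Proof.
exists (flatten [seq nseq (b i * om i) ('X_i ^+ mu i) | i <- index_enum 'I_n]).
split; last split.
- move=> x /flattenP [s /mapP [i _ ->]]; rewrite mem_nseq => /andP [_ /eqP ->].
  by exists i.
- rewrite size_flatten sumnE /shape -map_comp big_map wtM_sum.
  by apply: eq_bigr => i _; rewrite /= size_nseq.
- rewrite big_flatten /= big_map mpolyXE_id -prodrXl; apply: eq_bigr => i _.
  have -> : forall (x : {mpoly K[n]}) k, \prod_(y <- nseq k x) y = x ^+ k.
    by move=> x; elim=> [|k IH]; rewrite ?big_nil ?expr0 //= big_cons IH exprS.
  by rewrite -!exprM mulnA (mulnC (mu i)) -mulnA mu_om mulnC.
Qed.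

Lemma I_mono b : (l * M <= wtS M b)%N -> I 'X_[b].
Proof.
move=> Hb; have [s [Hs [Hsz Hp]]] := mono_list b.
apply: (@closure_of_pow _ _ _ (l * M)%N); first by rewrite muln_gt0 l_gt0.
rewrite -Hp; apply: pow_list; last by rewrite Hsz.
by move=> x /Hs [i ->]; apply: gen_base; exists i.
Qed.

Lemma I_gen i : I ('X_i ^+ mu i).
Proof. by rewrite mpolyXn; apply: I_mono; rewrite wtU_mu. Qed.

Lemma clos_mono k a : (k * (l * M) <= wtS M a)%N ->
  integral_closure (ideal_pow I k) 'X_[a].
Proof.
move=> Ha; have [s [Hs [Hsz Hp]]] := mono_list a.
apply: (@closure_of_pow _ _ _ (l * M)%N); first by rewrite muln_gt0 l_gt0.
rewrite -Hp; apply: pow_pow_list; last by rewrite Hsz.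
by move=> x /Hs [i ->]; apply: I_gen.
Qed.

Lemma pow_D k x : ideal_pow I k x -> suppP (DS M k) x.
Proof.
apply: (@powP _ _ (DS M)).
- move=> m; exists [::]; split=> //; split=> //.
  by apply/mnm_lepP => i; rewrite big_nil mnm0E.
- move=> a b m1 m2 [s1 [h1 [a1 l1]]] [s2 [h2 [a2 l2]]].
  exists (s1 ++ s2); split; first by rewrite size_cat h1 h2.
  split; first by rewrite all_cat a1 a2.
  apply/mnm_lepP => i; rewrite big_cat mnmDE !mnmDE.
  by apply: leq_add; [move/mnm_lepP: l1 | move/mnm_lepP: l2].
- move=> y /I_W Hy m /Hy Hm; exists [:: m]; split=> //; split.
    by rewrite /= andbT.
  by rewrite big_seq1; apply: lepm_refl.
Qed.

Lemma normal_iff : normal_ideal I <-> CombS M.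
Proof.
split.
  move=> Hn k k0 a Ha.
  have := Hn k k0 _ (clos_mono Ha) => /pow_D; apply.
  by rewrite msuppX mem_seq1.
move=> HC k k0 f Hf.
have Hw : W (k * (l * M))%N f.
  apply: (closure_W (wtMD M) _ Hf) => i x _ Hx.
  apply: (powW _ Hx) => y Hy.
  by apply: (powW _ Hy) => z; apply: I_W.
rewrite (mpolyE f) big_seq.
apply: (big_ind (ideal_pow I k)); [exact: pow0 | exact: powD |].
move=> m Hm; rewrite -mul_mpolyC; apply: powM.
have [s [Hs [Hall Hle]]] := HC k k0 m (Hw m Hm).
rewrite -(submK Hle) mpolyXD; apply: powM.
rewrite -[X in 'X_[X]]big_filter -mpolyX_prod big_filter.
apply: pow_listF; last by rewrite Hs.
by move=> b Hb; apply: I_mono; move/allP: Hall => /(_ b Hb).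
Qed.

End Mu.
End Main.

Local Close Scope ring_scope.

Section NatLists.
Variable T : eqType.
Implicit Types (s : seq T) (x y : T -> nat).

Lemma sum_le s x y : (forall b, b \in s -> y b <= x b) ->
  \sum_(b <- s) y b <= \sum_(b <- s) x b.
Proof. by move=> H; rewrite big_seq [X in _ <= X]big_seq; apply: leq_sum. Qed.

Lemma sum_subn s x y : (forall b, b \in s -> y b <= x b) ->
  \sum_(b <- s) (x b - y b) = \sum_(b <- s) x b - \sum_(b <- s) y b.
Proof.
elim: s => [|c s IH] H; first by rewrite !big_nil.
rewrite !big_cons IH; last by move=> b hb; apply: H; rewrite inE hb orbT.
have h1 := H c (mem_head _ _).
have h2 : \sum_(b <- s) y b <= \sum_(b <- s) x b.
  by apply: sum_le => b hb; apply: H; rewrite inE hb orbT.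
lia.
Qed.

Lemma sum_ge_const s x c : (forall b, b \in s -> c <= x b) ->
  size s * c <= \sum_(b <- s) x b.
Proof.
elim: s => [|d s IH] H; first by rewrite big_nil.
rewrite big_cons /= mulSn; apply: leq_add; first by apply: H; rewrite mem_head.
by apply: IH => b hb; apply: H; rewrite inE hb orbT.
Qed.

End NatLists.

Section Comb.
Variables (n : nat) (lam : 'I_n -> nat) (lst : 'I_n) (l : nat).
Hypothesis l_gt0 : 0 < l.
Local Notation w := (wS lam lst l).
Local Notation wtM := (wtS lam lst l).
Local Notation validM := (validS lam lst l).
Local Notation DM := (DS lam lst l).
Local Notation CombM := (CombS lam lst l).

Lemma w_ext (m1 m2 : 'X_{1..n}) : (forall i, i != lst -> m1 i = m2 i) -> w m1 = w m2.
Proof. by move=> H; apply: eq_bigr => i /H ->. Qed.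

Lemma w_U x : w (U_(lst) *+ x)%MM = 0.
Proof. by rewrite /wS big1 // => i ne; rewrite mulmnE mnm1E eq_sym (negbTE ne). Qed.

Lemma w0 : w 0%MM = 0.
Proof. by rewrite /wS big1 // => i _; rewrite mnm0E. Qed.

Lemma w_mono (m1 m2 : 'X_{1..n}) : (m1 <= m2)%MM -> w m1 <= w m2.
Proof.
move/mnm_lepP => H; apply: leq_sum => i _; apply: leq_mul => //.
Qed.

Lemma w_sum (s : seq 'X_{1..n}) : w (\sum_(b <- s) b)%MM = \sum_(b <- s) w b.
Proof. exact: (big_morph w (@wD _ lam lst l) w0). Qed.

Lemma comb1 M : 0 < M -> CombM (M + l) -> CombM M.
Proof.
move=> M0 HC k k0 a Ha; rewrite /wtS in Ha.
set Kk := k * l - w a.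
set a' := (a + U_(lst) *+ Kk)%MM.
have wa' : w a' = w a by rewrite wD w_U addn0.
have a'l : a' lst = a lst + Kk by rewrite mnmDE mulmnE mnm1E eqxx mul1n.
have Ha' : k * (l * (M + l)) <= wtM (M + l) a'.
  rewrite /wtS wa' a'l.
  have : k * l <= w a + Kk by rewrite /Kk; lia.
  move/(leq_mul (leqnn l)); nia.
have [s' [Hs' [Hall' Hle']]] := HC k k0 a' Ha'.
have Hge : forall b, b \in s' -> l - w b <= b lst.
  move=> b /(allP Hall'); rewrite /validS /wtS => Hb.
  have : (l - w b) * l <= b lst * l.
    have : (l - w b) * (M + l) <= b lst * l by rewrite mulnBl; lia.
    by apply: leq_trans; rewrite leq_mul2l leq_addl orbT.
  by rewrite leq_pmul2r.
have h2 : \sum_(b <- s') w b <= w a.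
  by rewrite -wa' -w_sum; apply: w_mono.
exists (map (fun b => b - U_(lst) *+ (l - w b))%MM s').
split; first by rewrite size_map.
split.
  apply/allP => b' /mapP [b Hb ->]; have := allP Hall' b Hb.
  have Hb2 := Hge b Hb.
  rewrite /validS /wtS mnmBE mulmnE mnm1E eqxx mul1n.
  rewrite (@w_ext (b - _)%MM b); last first.
    by move=> i ne; rewrite mnmBE mulmnE mnm1E eq_sym (negbTE ne) mul0n subn0.
  move=> Hb'; rewrite mulnBl.
  case: (leqP l (w b)) => hw.
    have -> : l - w b = 0 by lia.
    rewrite mul0n subn0; have : l * M <= w b * M by rewrite leq_mul2r hw orbT.
    lia.
  have e : (l - w b) * l = l * l - w b * l by rewrite mulnBl.
  have e2 : l * (M + l) = l * M + l * l by rewrite mulnDr.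
  have e3 : w b * (M + l) = w b * M + w b * l by rewrite mulnDr.
  have e4 : w b * l <= l * l by rewrite leq_mul2r ltnW ?orbT.
  lia.
apply/mnm_lepP => i; rewrite mnm_sumE big_map /=.
move/mnm_lepP: Hle' => /(_ i); rewrite mnm_sumE.
case: (eqVneq i lst) => [->|ne] hsum.
  rewrite a'l in hsum.
  under eq_bigr do rewrite mnmBE mulmnE mnm1E eqxx mul1n.
  rewrite sum_subn //.
  have h1 := @sum_ge_const _ s' (fun b => (l - w b) + w b) l.
  rewrite big_split /= Hs' in h1.
  have h3 : k * l <= \sum_(b <- s') (l - w b) + \sum_(b <- s') w b.
    by apply: h1 => b _; lia.
  rewrite leq_subLR; apply: (leq_trans hsum); rewrite addnC leq_add2r /Kk leq_subLR.
  apply: (leq_trans h3); rewrite addnC; apply: leq_add; [exact: h2 | exact: leqnn].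
under eq_bigr do rewrite mnmBE mulmnE mnm1E eq_sym (negbTE ne) mul0n subn0.
by rewrite mnmDE mulmnE mnm1E eq_sym (negbTE ne) mul0n addn0 in hsum.
Qed.

Lemma comb2 M : l <= M -> CombM M -> CombM (M + l).
Proof.
move=> lM HC k k0 a Ha; rewrite /wtS in Ha.
set Kk := k * l - w a.
set al := (M * Kk + l.-1) %/ l.
have hal1 : al * l < M * Kk + l.
  have := divn_eq (M * Kk + l.-1) l; have := ltn_pmod (M * Kk + l.-1) l_gt0.
  rewrite -/al; lia.
have hal2 : M * Kk <= al * l.
  have := divn_eq (M * Kk + l.-1) l; have := ltn_pmod (M * Kk + l.-1) l_gt0.
  rewrite -/al; lia.
have hK : Kk * (M + l) <= a lst * l.
  rewrite /Kk mulnBl.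
  have e1 : k * l * (M + l) = k * (l * (M + l)) by rewrite mulnA.
  lia.
have hala : al + Kk <= a lst.
  have : (al + Kk) * l < a lst * l + l.
    rewrite mulnDl; have : Kk * (M + l) = Kk * M + Kk * l by rewrite mulnDr.
    rewrite (mulnC Kk M); lia.
  by rewrite -mulSnr ltn_pmul2r.
set a0 := (a - U_(lst) *+ (a lst - al))%MM.
have wa0 : w a0 = w a.
  by apply: w_ext => i ne; rewrite mnmBE mulmnE mnm1E eq_sym (negbTE ne) mul0n subn0.
have a0l : a0 lst = al by rewrite mnmBE mulmnE mnm1E eqxx mul1n; lia.
have Ha0 : k * (l * M) <= wtM M a0.
  rewrite /wtS wa0 a0l.
  have : k * l <= w a + Kk by rewrite /Kk; lia.
  move/(leq_mul (leqnn M)) => h.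
  have e1 : k * (l * M) = M * (k * l) by rewrite mulnA mulnC.
  have e2 : M * (w a + Kk) = w a * M + M * Kk by rewrite mulnDr mulnC.
  lia.
have [s [Hs [Hall Hle]]] := HC k k0 a0 Ha0.
have Hv : forall b, b \in s -> (l - w b) * M <= b lst * l.
  move=> b /(allP Hall); rewrite /validS /wtS => Hb; rewrite mulnBl; lia.
exists (map (fun b => b + U_(lst) *+ (l - w b))%MM s).
split; first by rewrite size_map.
split.
  apply/allP => b' /mapP [b Hb ->]; have := allP Hall b Hb.
  rewrite /validS /wtS wD w_U addn0 mnmDE mulmnE mnm1E eqxx mul1n => Hb'.
  case: (leqP l (w b)) => hw.
    have : l * (M + l) <= w b * (M + l) by rewrite leq_mul2r hw orbT.
    lia.
  have e : (l - w b) * l = l * l - w b * l by rewrite mulnBl.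
  have e2 : l * (M + l) = l * M + l * l by rewrite mulnDr.
  have e3 : w b * (M + l) = w b * M + w b * l by rewrite mulnDr.
  have e4 : w b * l <= l * l by rewrite leq_mul2r ltnW ?orbT.
  rewrite mulnDl; lia.
apply/mnm_lepP => i; rewrite mnm_sumE big_map /=.
move/mnm_lepP: Hle => /(_ i); rewrite mnm_sumE.
case: (eqVneq i lst) => [->|ne] hs.
  rewrite a0l in hs.
  under eq_bigr do rewrite mnmDE mulmnE mnm1E eqxx mul1n.
  rewrite big_split /=.
  have hY : \sum_(b <- s) (l - w b) <= Kk.
    rewrite leqNgt; apply/negP => hY.
    have h1 : \sum_(b <- s) (l - w b) * M <= \sum_(b <- s) b lst * l by apply: sum_le.
    rewrite -!big_distrl /= in h1.
    have h2 : (Kk + 1) * M <= (\sum_(b <- s) (l - w b)) * M by rewrite leq_mul2r; lia.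
    have h3 : (\sum_(b <- s) b lst) * l <= al * l by rewrite leq_mul2r hs orbT.
    rewrite mulnDl mul1n in h2; rewrite (mulnC M Kk) in hal1.
    lia.
  lia.
under eq_bigr do rewrite mnmDE mulmnE mnm1E eq_sym (negbTE ne) mul0n addn0.
apply: leq_trans hs _; rewrite mnmBE mulmnE mnm1E eq_sym (negbTE ne) mul0n subn0 //.
Qed.

End Comb.

Theorem theorem5p1 (K : fieldType) (n : nat) (lam : 'I_n -> nat) :
  (2 <= n)%N ->
  (forall i, (0 < lam i)%N) ->
  (normal_ideal (@Imu K n (lam_shift lam)) -> normal_ideal (@Imu K n lam)) /\
  ((forall i : 'I_n, val i = n.-1 -> (lcm_init lam <= lam i)%N) ->
     normal_ideal (@Imu K n lam) -> normal_ideal (@Imu K n (lam_shift lam))).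
Proof.
move=> n2 lam_gt0.
have hn : (n.-1 < n)%N by rewrite ltn_predL; apply: leq_trans n2.
pose lst : 'I_n := Ordinal hn.
have lstE : forall i : 'I_n, (i == lst) = (val i == n.-1).
  by move=> i; rewrite -val_eqE.
have l_gt0 : (0 < lcm_init lam)%N.
  rewrite /lcm_init; apply: (big_ind (fun x => 0 < x)%N) => //.
  by move=> x y hx hy; rewrite lcmn_gt0 hx hy.
have lam_dvd : forall i, i != lst -> (lam i %| lcm_init lam)%N.
  move=> [j hj] ne; apply: (@biglcmn_sup _ (Ordinal hj)) => //=.
  rewrite lstE /= in ne; move/eqP: ne; lia.
have shift_lam : forall i, i != lst -> lam_shift lam i = lam i.
  by move=> i; rewrite lstE /lam_shift => /negbTE ->.
have shift_lst : lam_shift lam lst = (lam lst + lcm_init lam)%N.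
  by rewrite /lam_shift /= eqxx.
have Hs0 : (0 < lam_shift lam lst)%N by rewrite shift_lst addn_gt0 lam_gt0.
have iff1 := @normal_iff K n lam lst _ l_gt0 lam_dvd lam (fun _ _ => erefl) (lam_gt0 lst).
have iff2 := @normal_iff K n lam lst _ l_gt0 lam_dvd (lam_shift lam) shift_lam Hs0.
rewrite shift_lst in iff2.
split.
  move=> H1; apply: (proj2 iff1); exact (comb1 l_gt0 (lam_gt0 lst) (proj1 iff2 H1)).
move=> Hl H1; apply: (proj2 iff2); apply: (comb2 l_gt0 _ (proj1 iff1 H1)).
exact: Hl.
Qed.
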